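(* If the transition dynamics are deterministic, the policy that maximizes expected return is the policy that minimizes the time-step metric, i.e. $\pi^* = \pi^{\min}$, where $\pi^{\min}$ denotes the policy attaining the minimum time-step distance $d^{\min}_T(s, s_g)$ to the goal.
   Context: Consider a goal-conditioned MDP $\langle \mathcal{S}, \mathcal{A}, \mathcal{G}, P, \rho_0, \sigma, \gamma \rangle$ with discrete state space $\mathcal{S}$, discrete action space $\mathcal{A}$, goal set $\mathcal{G} \subseteq \mathcal{S}$, goal-conditioned transition dynamics $P(\cdot|s,a,s_g)$, start distribution $\rho_0$, goal distribution $\sigma$, and discount $\gamma \in [0,1)$. The reward is $r(s_t,a_t,s_{t+1}|s_g) = \mathbb{I}[s_{t+1}=s_g]$, and on reaching the goal the agent transitions to an absorbing state with zero reward thereafter (the episode terminates). Policies are $\pi(\cdot|s,s_g)$, and $\pi^*$ maximizes expected discounted return $\mathbb{E}[\sum_t \gamma^t r(s_t,a_t,s_{t+1}|s_g)]$. The time-step metric is $d^\pi_T(s, s_g) = \mathbb{E}[T(s_g|\pi, s)]$, where $T(s_g|\pi,s)$ is the random first time-step at which $s_g$ is reached starting from $s$ under $\pi$. The minimum time-step distance $d^{\min}_T$ satisfies the Bellman optimality condition $d^{\min}_T(s,s_g)=0$ if $s=s_g$ and $d^{\min}_T(s,s_g) = 1 + \min_{a} \sum_{s'} P(s'|s,a,s_g)\, d^{\min}_T(s',s_g)$ otherwise; $\pi^{\min}$ is the corresponding policy. The value under this reward is $V^\pi(s|s_g) = \mathbb{E}[\gamma^{T(s_g|\pi,s)}]$.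 *)

(* Defs.v *)
From HB Require Import structures.
From mathcomp Require Import all_boot all_order all_algebra.
From mathcomp Require Import all_classical all_reals all_analysis.
Set Implicit Arguments. Unset Strict Implicit. Unset Printing Implicit Defensive.
Import Order.TTheory GRing.Theory Num.Theory.
Local Open Scope ring_scope.

(* Goal-conditioned MDP with finite state type S and finite action type A.
   Transition gc_kernel: [P s a g s'] = P(s' | s, a, s_g). *)
Section GCMDP.
Variables (R : realType) (S A : finType).

Definition gc_kernel := S -> A -> S -> S -> R.
(* Stochastic goal-conditioned gc_policy: [pi s g a] = pi(a | s, s_g). *)
Definition gc_policy := S -> S -> A -> R.

Definition is_policy (pi : gc_policy) : Prop :=
  (forall s g a, 0 <= pi s g a) /\ (forall s g, \sum_(a : A) pi s g a = 1).

Definition deterministic (P : gc_kernel) : Prop :=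
  exists f : S -> A -> S -> S,
    forall s a g s', P s a g s' = (s' == f s a g)%:R.

(* [hit_prob P pi g n s] = Pr[ T(s_g | pi, s) = n ]: probability that the
   goal g is reached for the first time at time step n, starting from s. *)
Fixpoint hit_prob (P : gc_kernel) (pi : gc_policy) (g : S) (n : nat) (s : S) : R :=
  match n with
  | 0 => (s == g)%:R
  | n'.+1 => if s == g then 0 else
      \sum_(a : A) pi s g a * \sum_(s' : S) P s a g s' * hit_prob P pi g n' s'
  end.

Local Open Scope ereal_scope.

(* V^pi(s | s_g) = E[ gamma ^ T(s_g | pi, s) ]  (gamma^oo = 0). *)
Definition value (P : gc_kernel) (gamma : R) (pi : gc_policy) (s g : S) : \bar R :=
  \sum_(0 <= n <oo) ((gamma ^+ n * hit_prob P pi g n s)%R)%:E.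

Definition reach_prob (P : gc_kernel) (pi : gc_policy) (s g : S) : \bar R :=
  \sum_(0 <= n <oo) (hit_prob P pi g n s)%:E.

Definition dT (P : gc_kernel) (pi : gc_policy) (s g : S) : \bar R :=
  if reach_prob P pi s g < 1 then +oo
  else \sum_(0 <= n <oo) ((n%:R * hit_prob P pi g n s)%R)%:E.

Definition time_minimal (P : gc_kernel) (G : {set S}) (pi : gc_policy) : Prop :=
  forall pi', is_policy pi' ->
    forall s g, g \in G -> dT P pi s g <= dT P pi' s g.

Definition return_optimal (P : gc_kernel) (G : {set S}) (gamma : R)
    (pi : gc_policy) : Prop :=
  forall pi', is_policy pi' ->
    forall s g, g \in G -> value P gamma pi' s g <= value P gamma pi s g.

End GCMDP.

(* Main.v *)
Require Import Defs.
From HB Require Import structures.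
From mathcomp Require Import all_boot all_order all_algebra.
From mathcomp Require Import all_classical all_reals all_analysis.
Import Order.TTheory GRing.Theory Num.Theory.
Local Open Scope ring_scope.

Lemma det_sum {R : realType} {S A : finType} {P : gc_kernel R S A}
  {f : S -> A -> S -> S} (hf : forall s a g s', P s a g s' = (s' == f s a g)%:R)
  (h : S -> R) s a g : \sum_s' P s a g s' * h s' = h (f s a g).
Proof.
under eq_bigr do rewrite hf.
rewrite (bigD1 (f s a g)) //= eqxx mul1r big1 ?addr0 // => s' /negbTE ->.
by rewrite mul0r.
Qed.

Lemma hit_step {R : realType} {S A : finType} {P : gc_kernel R S A}
  {f : S -> A -> S -> S} (hf : forall s a g s', P s a g s' = (s' == f s a g)%:R)
  pi g n s : hit_prob P pi g n.+1 s =
   if s == g then 0 else \sum_a pi s g a * hit_prob P pi g n (f s a g).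
Proof.
rewrite /=; case: ifP => // _; apply: eq_bigr => a _.
by rewrite (det_sum hf).
Qed.

Lemma hit_ge0 {R : realType} {S A : finType} {P : gc_kernel R S A}
  {f : S -> A -> S -> S} (hf : forall s a g s', P s a g s' = (s' == f s a g)%:R)
  pi g n s : is_policy pi -> 0 <= hit_prob P pi g n s.
Proof.
move=> [pi0 _]; elim: n s => [|n IH] s; first exact: ler0n.
rewrite (hit_step hf); case: ifP => // _.
by apply: sumr_ge0 => a _; apply: mulr_ge0.
Qed.

Lemma hit_psum {R : realType} {S A : finType} {P : gc_kernel R S A}
  {f : S -> A -> S -> S} (hf : forall s a g s', P s a g s' = (s' == f s a g)%:R)
  pi g N s : is_policy pi -> \sum_(n < N) hit_prob P pi g n s <= 1.
Proof.
move=> [pi0 pi1]; elim: N s => [|N IH] s; first by rewrite big_ord0 ler01.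
rewrite big_ord_recl.
have -> : hit_prob P pi g 0 s = (s == g)%:R by [].
under eq_bigr => i _ do rewrite (hit_step hf pi g i).
have [sg|sg] := eqVneq s g.
  by rewrite big1 ?addr0.
rewrite add0r.

rewrite exchange_big /= -(pi1 s g); apply: ler_sum => a _.
rewrite -mulr_sumr -[X in _ <= X]mulr1; apply: ler_wpM2l => //.
Qed.

Fixpoint reach {S A : finType} (f : S -> A -> S -> S) (g : S) (n : nat) (s : S) : bool :=
  match n with
  | 0 => s == g
  | n'.+1 => (s == g) || [exists a, reach f g n' (f s a g)]
  end.

Lemma hit_unreach {R : realType} {S A : finType} {P : gc_kernel R S A}
  {f : S -> A -> S -> S} (hf : forall s a g s', P s a g s' = (s' == f s a g)%:R)
  pi g n s : ~~ reach f g n s -> hit_prob P pi g n s = 0.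
Proof.
elim: n s => [|n IH] s; first by rewrite /= => /negbTE ->.
move=> H0; have : ~~ ((s == g) || [exists a, reach f g n (f s a g)]) := H0.
rewrite negb_or => /andP[sg /existsPn H].
rewrite (hit_step hf) (negbTE sg) big1 // => a _.
by rewrite IH ?mulr0.
Qed.

Definition dist {S A : finType} (f : S -> A -> S -> S) (g s : S) : nat :=
  match pselect (exists n, reach f g n s) with
  | left H => ex_minn H
  | right _ => 0
  end.

Lemma dist_spec {S A : finType} (f : S -> A -> S -> S) g s :
  (exists n, reach f g n s) ->
  reach f g (dist f g s) s /\ forall m, reach f g m s -> (dist f g s <= m)%N.
Proof.
move=> H; rewrite /dist; case: pselect => // H'.
by case: ex_minnP.
Qed.

Definition pi0 {R : realType} {S A : finType} (f : S -> A -> S -> S) (g : S)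
  (pi : gc_policy R S A) : gc_policy R S A := fun s g' a =>
  if [pick b | reach f g (dist f g s).-1 (f s b g)] is Some b then (a == b)%:R
  else pi s g' a.

Lemma pi0_policy {R : realType} {S A : finType} (f : S -> A -> S -> S) g
  (pi : gc_policy R S A) : is_policy pi -> is_policy (pi0 f g pi).
Proof.
move=> [p0 p1]; split => s g' *; rewrite /pi0; case: pickP => // b _.
rewrite (bigD1 b) //= eqxx big1 ?addr0 // => a /negbTE -> //.
Qed.

Lemma hit_opt {R : realType} {S A : finType} {P : gc_kernel R S A}
  {f : S -> A -> S -> S} (hf : forall s a g s', P s a g s' = (s' == f s a g)%:R)
  pi g k : forall s, (exists n, reach f g n s) -> dist f g s = k ->
  forall n, hit_prob P (pi0 f g pi) g n s = (n == k)%:R.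
Proof.
elim: k => [|k IH] s Hr.
  move=> Hk; have [sg _] := dist_spec _ _ _ Hr; rewrite Hk /= in sg.
  case => [|n] /=; first by rewrite sg.
  by rewrite sg.
move: (dist_spec _ _ _ Hr) => [Hd Hmin] Hk.
have sg : s != g.
  apply/negP => /eqP sg; have := Hmin 0%N; rewrite Hk /= sg eqxx.
  by move=> /(_ isT).
have : reach f g k.+1 s by rewrite -Hk.
rewrite /= (negbTE sg) /= => /existsP [a0 Ha0].
have [b Hb] : {b | [pick b | reach f g (dist f g s).-1 (f s b g)] = Some b /\
                  reach f g k (f s b g)}.
  case: pickP => [b Hb|H]; first by exists b; rewrite Hk in Hb.
  by move: (H a0); rewrite Hk /= Ha0.
move: Hb => [Hpick Hb].
have Hr' : exists n, reach f g n (f s b g) by exists k.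
have Hdb : dist f g (f s b g) = k.
  move: (dist_spec _ _ _ Hr') => [Hdb Hminb]; apply/eqP; rewrite eqn_leq Hminb //=.
  rewrite -ltnS -Hk; apply: Hmin => /=; rewrite (negbTE sg) /=.
  by apply/existsP; exists b.
case => [|n]; first by rewrite /= (negbTE sg).
rewrite (hit_step hf) (negbTE sg) (bigD1 b) //= /pi0 Hpick eqxx mul1r.
rewrite big1 ?addr0; first by rewrite (IH _ Hr' Hdb n).
by move=> a /negbTE ->; rewrite mul0r.
Qed.

Lemma hit_below {R : realType} {S A : finType} {P : gc_kernel R S A}
  {f : S -> A -> S -> S} (hf : forall s a g s', P s a g s' = (s' == f s a g)%:R)
  pi g s n : (exists n, reach f g n s) -> (n < dist f g s)%N ->
  hit_prob P pi g n s = 0.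
Proof.
move=> Hr Hn; apply: (hit_unreach hf); apply/negP => H.
have [_ Hm] := dist_spec _ _ _ Hr.
by have := Hm _ H; rewrite leqNgt Hn.
Qed.

Lemma hit_never {R : realType} {S A : finType} {P : gc_kernel R S A}
  {f : S -> A -> S -> S} (hf : forall s a g s', P s a g s' = (s' == f s a g)%:R)
  pi g s n : ~ (exists n, reach f g n s) -> hit_prob P pi g n s = 0.
Proof.
move=> Hr; apply: (hit_unreach hf); apply/negP => H; apply: Hr; by exists n.
Qed.

Local Open Scope ereal_scope.

Lemma ser_single {R : realType} (u : nat -> R) d :
  (forall n, (0 <= u n)%R) -> (forall n, n != d -> u n = 0%R) ->
  \sum_(0 <= n <oo) (u n)%:E = (u d)%:E.
Proof.
move=> u0 ud; rewrite (nneseriesD1 (n:=d)) //; last by move=> k _; rewrite lee_fin.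
rewrite eseries0 ?adde0 // => i _ /andP[_ H]; by rewrite ud.
Qed.

Lemma ser_term {R : realType} (u : nat -> R) m :
  (forall n, (0 <= u n)%R) -> (u m)%:E <= \sum_(0 <= n <oo) (u n)%:E.
Proof.
move=> u0; rewrite (nneseriesD1 (n:=m)) //; last by move=> k _; rewrite lee_fin.
rewrite leeDl //; apply: nneseries_ge0 => k _ _; by rewrite lee_fin.
Qed.

Lemma ser_le1 {R : realType} (u : nat -> R) :
  (forall n, (0 <= u n)%R) -> (forall N, (\sum_(n < N) u n <= 1)%R) ->
  \sum_(0 <= n <oo) (u n)%:E <= 1.
Proof.
move=> u0 uN; apply: lime_le.
  by apply: is_cvg_nneseries => n _ _; rewrite lee_fin.
apply: nearW => N; rewrite sumEFin lee_fin big_mkord; exact: uN.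
Qed.

Lemma ser_zero {R : realType} (u : nat -> R) :
  (forall n, (0 <= u n)%R) -> \sum_(0 <= n <oo) (u n)%:E <= 0 ->
  forall n, u n = 0%R.
Proof.
move=> u0 H n; apply/eqP; rewrite eq_le u0 andbT -lee_fin.
exact: le_trans (ser_term u n u0) H.
Qed.
Lemma part1_sg {R : realType} {S A : finType} {P : gc_kernel R S A}
  {f : S -> A -> S -> S} (hf : forall s a g s', P s a g s' = (s' == f s a g)%:R)
  (gamma : R) (g0 : (0 <= gamma)%R) (g1 : (gamma < 1)%R)
  pi pi' (Hpi : is_policy pi) (Hpi' : is_policy pi') s g
  (Hmin : dT P pi s g <= dT P (pi0 f g pi) s g) :
  value P gamma pi' s g <= value P gamma pi s g.
Proof.
have hge0 := fun n => hit_ge0 hf pi g n s Hpi.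
have hge0' := fun n => hit_ge0 hf pi' g n s Hpi'.
case: (pselect (exists n, reach f g n s)) => Hr; last first.
  rewrite /value eseries0.
    by apply: nneseries_ge0 => n _ _; rewrite lee_fin mulr_ge0 ?exprn_ge0.
  by move=> n _ _; rewrite (hit_never hf) ?mulr0.
set d := dist f g s.
have H0 n : hit_prob P (pi0 f g pi) g n s = (n == d)%:R := hit_opt hf pi g d s Hr erefl n.
have hge00 := fun n => hit_ge0 hf (pi0 f g pi) g n s (pi0_policy f g pi Hpi).
have dT0 : dT P (pi0 f g pi) s g = d%:R%:E.
  rewrite /dT; have -> : reach_prob P (pi0 f g pi) s g = 1.
    rewrite /reach_prob (ser_single _ d) ?H0 ?eqxx // => n.
    by rewrite H0 => /negbTE ->.
  rewrite ltxx (ser_single _ d) ?H0 ?eqxx ?mulr1 //.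
    by move=> n; rewrite mulr_ge0.
  by move=> n; rewrite H0 => /negbTE ->; rewrite mulr0.
move: Hmin; rewrite dT0 /dT; case: ifP => Hrp; first by rewrite leye_eq.
move/negbT: Hrp; rewrite -leNgt => Hrp Hsum.
pose v n := (((d < n)%N)%:R * hit_prob P pi g n s)%R.
have v0 n : (0 <= v n)%R by rewrite mulr_ge0.
have Hge : d%:R%:E + \sum_(0 <= n <oo) (v n)%:E <=
           \sum_(0 <= n <oo) ((n%:R * hit_prob P pi g n s)%R)%:E.
  apply: (@le_trans _ _ (d%:R%:E * reach_prob P pi s g + \sum_(0 <= n <oo) (v n)%:E)).
    apply: leeD2r; rewrite -[X in X <= _]mule1; apply: lee_wpmul2l => //.
  rewrite /reach_prob -nneseriesZl; last by move=> i _; rewrite lee_fin.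
  under eq_eseriesr do rewrite -EFinM.
  rewrite -nneseriesD; last 2 first.
  - by move=> i _ _; rewrite lee_fin mulr_ge0.
  - by move=> i _ _; rewrite lee_fin.
  apply: lee_nneseries.
    by move=> i _ _; rewrite lee_fin addr_ge0 ?mulr_ge0.
  move=> n _; rewrite -EFinD lee_fin /v.
  case: (ltngtP n d) => Hnd.
  - by rewrite (hit_below hf) // !mulr0 addr0.
  - rewrite -mulrDl; apply: ler_wpM2r => //.
    by rewrite -natrD addn1 ler_nat.
  - by rewrite mul0r addr0 Hnd.
have Hv : \sum_(0 <= n <oo) (v n)%:E <= 0.
  have := le_trans Hge Hsum; rewrite -[X in _ <= X](adde0 d%:R%:E) leeD2lE //.
have Hz n : n != d -> hit_prob P pi g n s = 0%R.
  move=> Hnd; case: (ltngtP n d) => Hnd'.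
  - exact: (hit_below hf).
  - by have := ser_zero v v0 Hv n; rewrite /v Hnd' mul1r.
  - by rewrite Hnd' eqxx in Hnd.
have Hrd : reach_prob P pi s g = (hit_prob P pi g d s)%:E.
  by rewrite /reach_prob (ser_single _ d).
have hd1 : (1 <= hit_prob P pi g d s)%R by rewrite -lee_fin -Hrd.
have -> : value P gamma pi s g = ((gamma ^+ d * hit_prob P pi g d s)%R)%:E.
  rewrite /value (ser_single _ d) // => n.
    by rewrite mulr_ge0 ?exprn_ge0.
  by move=> /Hz ->; rewrite mulr0.
apply: (@le_trans _ _ ((gamma ^+ d)%:E)); last first.
  by rewrite lee_fin ler_peMr ?exprn_ge0.
apply: (@le_trans _ _ ((gamma ^+ d)%:E * reach_prob P pi' s g)); last first.
  rewrite -[X in _ <= X]mule1; apply: lee_wpmul2l; first by rewrite lee_fin exprn_ge0.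
  apply: ser_le1 => // N; exact: (hit_psum hf).
rewrite /reach_prob -nneseriesZl; last by move=> i _; rewrite lee_fin.
apply: lee_nneseries.
  by move=> i _ _; rewrite lee_fin mulr_ge0 ?exprn_ge0.
move=> n _; rewrite -EFinM lee_fin.
case: (ltnP n d) => Hnd.
  by rewrite (hit_below hf) // !mulr0.
by apply: ler_wpM2r => //; apply: ler_wiXn2l => //; exact: ltW.
Qed.

Lemma part2_sg {R : realType} {S A : finType} {P : gc_kernel R S A}
  {f : S -> A -> S -> S} (hf : forall s a g s', P s a g s' = (s' == f s a g)%:R)
  (gamma : R) (gpos : (0 < gamma)%R) (g1 : (gamma < 1)%R)
  pi pi' (Hpi : is_policy pi) (Hpi' : is_policy pi') s g
  (Hopt : value P gamma (pi0 f g pi) s g <= value P gamma pi s g) :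
  dT P pi s g <= dT P pi' s g.
Proof.
have g0 : (0 <= gamma)%R := ltW gpos.
have hge0 := fun n => hit_ge0 hf pi g n s Hpi.
have hge0' := fun n => hit_ge0 hf pi' g n s Hpi'.
case: (pselect (exists n, reach f g n s)) => Hr; last first.
  have Hrp' : reach_prob P pi' s g = 0.
    by rewrite /reach_prob eseries0 // => n _ _; rewrite (hit_never hf).
  by rewrite [X in _ <= X]/dT Hrp' lte01 leey.
set d := dist f g s.
have H0 n : hit_prob P (pi0 f g pi) g n s = (n == d)%:R := hit_opt hf pi g d s Hr erefl n.
have hge00 := fun n => hit_ge0 hf (pi0 f g pi) g n s (pi0_policy f g pi Hpi).
have V0 : value P gamma (pi0 f g pi) s g = (gamma ^+ d)%:E.
  rewrite /value (ser_single _ d) ?H0 ?eqxx ?mulr1 //.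
    by move=> n; rewrite mulr_ge0 ?exprn_ge0.
  by move=> n; rewrite H0 => /negbTE ->; rewrite mulr0.
rewrite V0 in Hopt.
pose c := (gamma ^+ d - gamma ^+ d.+1)%R.
have c0 : (0 < c)%R by rewrite subr_gt0 ltr_iXn2l.
pose v n := (((d < n)%N)%:R * hit_prob P pi g n s)%R.
have v0 n : (0 <= v n)%R by rewrite mulr_ge0.
have Hrp1 : reach_prob P pi s g <= 1.
  apply: ser_le1 => // N; exact: (hit_psum hf).
have Hle : value P gamma pi s g + c%:E * \sum_(0 <= n <oo) (v n)%:E <=
           (gamma ^+ d)%:E * reach_prob P pi s g.
  rewrite /value /reach_prob -!nneseriesZl; last 2 first.
  - by move=> i _; rewrite lee_fin.
  - by move=> i _; rewrite lee_fin.
  rewrite -nneseriesD; last 2 first.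
  - by move=> i _ _; rewrite lee_fin mulr_ge0 ?exprn_ge0.
  - move=> i _ _; rewrite -EFinM lee_fin; exact: mulr_ge0 (ltW c0) (v0 i).
  apply: lee_nneseries.
    move=> i _ _; rewrite -EFinM -EFinD lee_fin; apply: addr_ge0; [exact: mulr_ge0 (exprn_ge0 _ g0) (hge0 i)|exact: mulr_ge0 (ltW c0) (v0 i)].
  move=> n _; rewrite -!EFinM -EFinD lee_fin /v.
  case: (ltngtP n d) => Hnd.
  - by rewrite (hit_below hf) // !mulr0 addr0.
    rewrite (_ : (true%:R = 1 :> R)%R) ?mul1r -?mulrDl; last by rewrite /= mulr1n.
    apply: ler_wpM2r => //.
    rewrite /c addrCA gerDl subr_le0; apply: ler_wiXn2l => //; exact: ltW.
  - by rewrite mul0r mulr0 addr0 Hnd.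
have Hv : \sum_(0 <= n <oo) (v n)%:E <= 0.
  rewrite -(pmule_rle0 _ (x:=c%:E)) ?lte_fin //.
  have H1 : (gamma ^+ d)%:E + c%:E * \sum_(0 <= n <oo) (v n)%:E <= (gamma ^+ d)%:E.
    apply: le_trans (leeD2r _ Hopt) _; apply: le_trans Hle _.
    rewrite -[X in _ <= X]mule1; apply: lee_wpmul2l => //.
    by rewrite lee_fin exprn_ge0.
  by move: H1; rewrite -[X in _ <= X](adde0 (gamma ^+ d)%:E) leeD2lE.
have Hz n : n != d -> hit_prob P pi g n s = 0%R.
  move=> Hnd; case: (ltngtP n d) => Hnd'.
  - exact: (hit_below hf).
  - by have := ser_zero v v0 Hv n; rewrite /v Hnd' mul1r.
  - by rewrite Hnd' eqxx in Hnd.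
have Hrd : reach_prob P pi s g = (hit_prob P pi g d s)%:E.
  by rewrite /reach_prob (ser_single _ d).
have Vd : value P gamma pi s g = ((gamma ^+ d * hit_prob P pi g d s)%R)%:E.
  rewrite /value (ser_single _ d) // => n.
    by rewrite mulr_ge0 ?exprn_ge0.
  by move=> /Hz ->; rewrite mulr0.
have hd1 : (1 <= hit_prob P pi g d s)%R.
  by move: Hopt; rewrite Vd lee_fin ler_pMr // exprn_gt0.
have hd1' : (hit_prob P pi g d s <= 1)%R by rewrite -lee_fin -Hrd.
rewrite [X in X <= _]/dT Hrd lte_fin ltNge hd1 /=.
rewrite (ser_single _ d); last 2 first.
- by move=> n; rewrite mulr_ge0.
- by move=> n /Hz ->; rewrite mulr0.
rewrite /dT; case: ifP => Hrp'; first exact: leey.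
move/negbT: Hrp'; rewrite -leNgt => Hrp'.
apply: (@le_trans _ _ (d%:R%:E)).
  by rewrite lee_fin -[X in (_ <= X)%R]mulr1 ler_wpM2l.
apply: (@le_trans _ _ (d%:R%:E * reach_prob P pi' s g)).
  rewrite -[X in X <= _]mule1; apply: lee_wpmul2l => //.
rewrite /reach_prob -nneseriesZl; last by move=> i _; rewrite lee_fin.
apply: lee_nneseries.
  by move=> i _ _; rewrite -EFinM lee_fin mulr_ge0.
move=> n _; rewrite -EFinM lee_fin.
case: (ltnP n d) => Hnd.
  by rewrite (hit_below hf) // !mulr0.
by apply: ler_wpM2r => //; rewrite ler_nat.
Qed.

Local Close Scope ereal_scope.
Local Open Scope ring_scope.

Theorem proposition2 (R : realType) (S A : finType) (G : {set S})
    (P : gc_kernel R S A) (gamma : R) :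
  deterministic P -> 0 <= gamma -> gamma < 1 ->
  (forall pi : gc_policy R S A, is_policy pi ->
     time_minimal P G pi -> return_optimal P G gamma pi) /\
  (0 < gamma -> forall pi : gc_policy R S A, is_policy pi ->
     return_optimal P G gamma pi -> time_minimal P G pi).
Proof.
move=> [f hf] g0 g1; split.
- move=> pi Hpi Hmin pi' Hpi' s g gG.
  apply: (part1_sg hf _ g0 g1 _ _ Hpi Hpi').
  exact: Hmin _ (pi0_policy f g pi Hpi) s g gG.
- move=> gpos pi Hpi Hopt pi' Hpi' s g gG.
  apply: (part2_sg hf _ gpos g1 _ _ Hpi Hpi').
  exact: Hopt _ (pi0_policy f g pi Hpi) s g gG.
Qed.
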